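(* Let $\alpha\in(0,1)$. Assume the setting described in the context, and assume there exist $\varepsilon_{\mathrm{test}}\in(0,1)$, $\{\varepsilon_{\mathrm{test}}(i)\}_{i\in I_{\mathrm{test}}}\subset(0,1)$ and $\delta_{\mathrm{test}}\in(0,1)$ such that for every measurable $q:(\mathcal{X}\times\mathcal{Y})^{n_{\mathrm{train}}}\to\mathbb{R}$ and every $i\in I_{\mathrm{test}}$, \[\left|\mathbb{P}[\widehat{s}_{\mathrm{train}}(X_i,Y_i)\le q_{\mathrm{train}}]-\mathbb{E}[P_{q,\mathrm{train}}]\right|\le\varepsilon_{\mathrm{test}}(i),\] and moreover \[\mathbb{P}\left[\left|\frac{1}{n_{\mathrm{test}}}\sum_{i\in I_{\mathrm{test}}}\mathbf{1}\{\widehat{s}_{\mathrm{train}}(X_i,Y_i)\le q_{\mathrm{train}}\}-P_{q,\mathrm{train}}\right|\le\varepsilon_{\mathrm{test}}\right]\ge 1-\delta_{\mathrm{test}}.\] Then for all $i\in I_{\mathrm{test}}$, \[\mathbb{P}\left[\widehat{s}_{\mathrm{train}}(X_i,Y_i)\le\widehat{q}^{(i)}_{1-\alpha,\mathrm{cal}}\right]\ge 1-\alpha-\varepsilon_{\mathrm{test}}(i)-\varepsilon_{\mathrm{test}}-\delta_{\mathrm{test}}-\frac{1}{n_{\mathrm{test}}}.\] Moreover, \[\mathbb{P}\left[\frac{1}{n_{\mathrm{test}}}\sum_{i\in I_{\mathrm{test}}}\mathbf{1}\{\widehat{s}_{\mathrm{train}}(X_i,Y_i)\le\widehat{q}^{(i)}_{1-\alpha,\mathrm{cal}}\}\ge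 1-\alpha-\varepsilon_{\mathrm{test}}-\frac{1}{n_{\mathrm{test}}}\right]\ge 1-2\delta_{\mathrm{test}}.\]
   Context: (Rank-one-out conformal prediction.) Let $\mathcal{X},\mathcal{Y}$ be measurable spaces. The sample $(X_i,Y_i)_{i=1}^n$ consists of random pairs in $\mathcal{X}\times\mathcal{Y}$, and $(X_*,Y_* )$ is an additional random pair, independent of the sample, with $(X_i,Y_i)\sim(X_*,Y_* )$ for all $i$. Write $n=n_{\mathrm{train}}+n_{\mathrm{test}}$ with positive integers, $n_{\mathrm{test}}\ge2$, $I_{\mathrm{train}}=\{1,\dots,n_{\mathrm{train}}\}$, $I_{\mathrm{test}}=\{n_{\mathrm{train}}+1,\dots,n\}$. Let $s:(\mathcal{X}\times\mathcal{Y})^{n_{\mathrm{train}}+1}\to\mathbb{R}$ be any (measurable) function and $\widehat{s}_{\mathrm{train}}(x,y)=s((X_i,Y_i)_{i\in I_{\mathrm{train}}},(x,y))$. For $i\in I_{\mathrm{test}}$ and $\phi\in[0,1)$, $\widehat{q}^{(i)}_{\phi,\mathrm{cal}}=\inf\{t\in\mathbb{R}:\frac{1}{n_{\mathrm{test}}-1}\sum_{j\in I_{\mathrm{test}}\setminus\{i\}}\mathbf{1}\{\widehat{s}_{\mathrm{train}}(X_j,Y_j)\le t\}\ge\phi\}$. For measurable $q:(\mathcal{X}\times\mathcal{Y})^{n_{\mathrm{train}}}\to\mathbb{R}$, $q_{\mathrm{train}}=q((X_i,Y_i)_{i\in I_{\mathrm{train}}})$ and $P_{q,\mathrm{train}}=\mathbb{P}[\widehat{s}_{\mathrm{train}}(X_*,Y_*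 )\le q_{\mathrm{train}}\mid (X_i,Y_i)_{i\in I_{\mathrm{train}}}]$. *)

(* Defs.v *)
From HB Require Import structures.
From mathcomp Require Import all_boot all_order all_algebra.
From mathcomp Require Import all_classical all_reals all_analysis.
Set Implicit Arguments. Unset Strict Implicit. Unset Printing Implicit Defensive.
Import Order.TTheory GRing.Theory Num.Theory.
Local Open Scope classical_set_scope.
Local Open Scope ring_scope.

Definition indep2 {d d1 d2 : measure_display} {R : realType}
  {Omega : measurableType d} {T1 : measurableType d1} {T2 : measurableType d2}
  (P : probability Omega R) (U : Omega -> T1) (V : Omega -> T2) : Prop :=
  forall (A : set T1) (B : set T2), measurable A -> measurable B ->
    P (U @^-1` A `&` V @^-1` B) = (P (U @^-1` A) * P (V @^-1` B))%E.

Definition sample {d : measure_display} {Omega : measurableType d} {T : Type}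
  (n : nat) (Z : 'I_n -> Omega -> T) (w : Omega) : n.-tuple T :=
  [tuple Z i w | i < n].

Definition train_data {Omega T : Type} (ntrain ntest : nat)
  (Z : 'I_(ntrain + ntest) -> Omega -> T) (w : Omega) : ntrain.-tuple T :=
  [tuple Z (lshift ntest i) w | i < ntrain].

Definition qcal {R : realType} (m : nat) (phi : R) (v : 'I_m -> R) (i : 'I_m) : R :=
  inf [set t : R | phi <= (m.-1)%:R^-1 * \sum_(j < m | j != i) ((v j <= t)%R : bool)%:R].

(* P_{q,train}(w) = P[ s_train(w)(Z_* ) <= q(train(w)) | train ],
   realised (via the independence of Z_* from the sample) as the
   probability over an independent copy w' of Z_* with the training data
   frozen at w. *)
Definition Pq_train {d d' : measure_display} {R : realType}
  {Omega : measurableType d} {T : measurableType d'}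
  (P : probability Omega R) (ntrain ntest : nat)
  (s : ntrain.-tuple T -> T -> R) (q : ntrain.-tuple T -> R)
  (Z : 'I_(ntrain + ntest) -> Omega -> T) (Zstar : Omega -> T) (w : Omega) : R :=
  fine (P [set w' | s (train_data Z w) (Zstar w') <= q (train_data Z w)]).

(* Main.v *)
Require Import Defs.
From HB Require Import structures.
From mathcomp Require Import all_boot all_order all_algebra.
From mathcomp Require Import all_classical all_reals all_analysis.
From mathcomp Require Import measurable_realfun.
From mathcomp Require Import lra.
Import Order.TTheory GRing.Theory Num.Theory.
Local Open Scope classical_set_scope.
Local Open Scope ring_scope.

Section Qsec.
Context (R : realType) (m : nat) (Hm : (1 < m)%N).

Lemma gap (a : R) (v : 'I_m -> R) :
  exists2 e, 0 < e & forall j, v j < a -> v j <= a - e.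
Proof.
pose S := \sum_(k < m) `|a - v k|^-1.
have S0 : 0 <= S by apply: sumr_ge0 => k _; rewrite invr_ge0.
exists (1 + S)^-1; first by rewrite invr_gt0 ltr_pwDl.
move=> j vja.
have g0 : 0 < a - v j by rewrite subr_gt0.
have gS : (a - v j)^-1 <= S.
  rewrite /S (bigD1 j) //= gtr0_norm // lerDl.
  by apply: sumr_ge0 => k _; rewrite invr_ge0.
have : (a - v j)^-1 < 1 + S by rewrite (le_lt_trans gS) // ltrDr.
move=> h1.
have p1 : 0 < 1 + S by rewrite ltr_pwDl.
have h : (1 + S)^-1 < a - v j.
  by rewrite -[ltRHS]invrK ltf_pV2 ?posrE ?invr_gt0.
by rewrite lerBrDr -lerBrDl ltW.
Qed.

Variable (phi : R) (phi0 : 0 < phi) (phi1 : phi <= 1).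

Definition sfrac (v : 'I_m -> R) (i : 'I_m) : R :=
  (m.-1)%:R^-1 * \sum_(j < m | j != i) ((v j < v i)%R : bool)%:R.

Definition frac (v : 'I_m -> R) (i : 'I_m) (t : R) : R :=
  (m.-1)%:R^-1 * \sum_(j < m | j != i) ((v j <= t)%R : bool)%:R.

Lemma m1pos : 0 < (m.-1)%:R :> R.
Proof. by rewrite ltr0n; case: m Hm => [|[]]. Qed.

Lemma frac_big (v : 'I_m -> R) i t : (forall j, v j <= t) -> frac v i t = 1.
Proof.
move=> h; rewrite /frac (eq_bigr (fun=> 1)); last by move=> j _; rewrite h.
rewrite sumr_const.
rewrite (_ : #|_| = m.-1); first by rewrite mulVf // gt_eqF // m1pos.
by rewrite cardC1 card_ord.
Qed.

Lemma frac_small (v : 'I_m -> R) i t : (forall j, t < v j) -> frac v i t = 0.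
Proof.
move=> h; rewrite /frac big1 ?mulr0 // => j _.
by rewrite leNgt h.
Qed.

Lemma S_ne (v : 'I_m -> R) i : [set t | phi <= frac v i t] !=set0.
Proof.
exists (\sum_(k < m) `|v k|); rewrite /= frac_big // => j.
apply: le_trans (ler_norm _) _.
by rewrite (bigD1 j) //= lerDl sumr_ge0.
Qed.

Lemma S_lb (v : 'I_m -> R) i : has_lbound [set t | phi <= frac v i t].
Proof.
exists (- \sum_(k < m) `|v k|) => t /= ht.
rewrite leNgt; apply/negP => tl.
have : frac v i t = 0.
  apply: frac_small => j; apply: lt_le_trans tl _.
  rewrite lerNl; apply: le_trans (ler_norm _) _; rewrite normrN.
  by rewrite (bigD1 j) //= lerDl sumr_ge0.
by move=> h; move: ht; rewrite h leNgt phi0.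
Qed.

Lemma frac_mono (v : 'I_m -> R) i t t' : t <= t' -> frac v i t <= frac v i t'.
Proof.
move=> tt'; rewrite /frac ler_pM2l ?invr_gt0 ?m1pos //.
apply: ler_sum => j _; case: (v j <= t) /idP => h; last by rewrite ler0n.
by rewrite (le_trans h tt').
Qed.

Lemma qcal_iff (v : 'I_m -> R) i : (v i <= qcal phi v i) = (sfrac v i < phi).
Proof.
apply/idP/idP => h.
  rewrite ltNge; apply/negP => hs.
  have [e e0 he] := gap (v i) v.
  have : phi <= frac v i (v i - e).
    apply: le_trans hs _; rewrite /sfrac /frac ler_pM2l ?invr_gt0 ?m1pos //.
    apply: ler_sum => j _; case: (v j < v i) /idP => hj; last by rewrite ler0n.
    by rewrite (he j hj).
  move=> /(ge_inf (S_lb v i)); rewrite -/(qcal phi v i) => h2.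
  by have := le_trans h h2; move=> h3; lra.
apply: lb_le_inf; first exact: S_ne.
move=> t /= ht; rewrite leNgt; apply/negP => tvi.
have : frac v i t <= sfrac v i.
  rewrite /sfrac /frac ler_pM2l ?invr_gt0 ?m1pos //.
  apply: ler_sum => j _; case: (v j <= t) /idP => hj; last by rewrite ler0n.
  by rewrite (le_lt_trans hj tvi).
move=> h2; have := le_lt_trans (le_trans ht h2) h; by rewrite ltxx.
Qed.

Lemma final_arith (M G x : R) : 0 < M -> x * M = 1 -> (M - 1) * phi <= G -> 0 < x ->
  phi - x <= x * G.
Proof.
move=> M0 xM hG x0.
have h1 : x * ((M - 1) * phi) <= x * G by rewrite ler_pM2l.
have h2 : x * ((M - 1) * phi) = phi - x * phi.
  by rewrite mulrA mulrBr xM mulr1 mulrBl mul1r.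
rewrite h2 in h1.
have : x * phi <= x by rewrite ger_pMr.
move=> h3; lra.
Qed.

Lemma part2 (v : 'I_m -> R) :
  phi - m%:R^-1 <= m%:R^-1 * \sum_(i < m) ((v i <= qcal phi v i)%R : bool)%:R.
Proof.
have M0 : 0 < m%:R :> R by rewrite ltr0n; case: m Hm.
have xM : m%:R^-1 * m%:R = 1 :> R by rewrite mulVf // gt_eqF.
have x0 : 0 < m%:R^-1 :> R by rewrite invr_gt0.
apply: (@final_arith m%:R) => //.
case: (pickP (fun i => ~~ (v i <= qcal phi v i))) => [i0 bad0 | allgood]; last first.
  rewrite (eq_bigr (fun=> 1)); last first.
    by move=> i _; have := allgood i; rewrite /= => /negbFE ->.
  rewrite sumr_const card_ord.
  have : (m%:R - 1) * phi <= (m%:R - 1) * 1 :> R.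
    by rewrite ler_pM2l // subr_gt0 ltr1n.
  by rewrite mulr1 => h; apply: le_trans h _; rewrite -[X in _ <= X]mulr_natr mul1r lerBlDr lerDl.
pose cnt i := #|[set k | v k < v i]%SET|.
have [istar bad hmin] := @arg_minnP _ i0 (fun i => ~~ (v i <= qcal phi v i)) cnt bad0.
have good j : v j < v istar -> v j <= qcal phi v j.
  move=> hj; apply/negPn/negP => badj.
  have := hmin j badj; rewrite leqNgt => /negP; apply.
  apply: proper_card; apply/properP; split.
    by apply/fintype.subsetP => k; rewrite !inE => hk; apply: lt_trans hk hj.
  by exists j; rewrite !inE ?ltxx.
have hs : phi <= sfrac v istar by rewrite leNgt -qcal_iff.
have e1 : (m%:R - 1) * phi <= \sum_(j < m | j != istar) ((v j < v istar)%R : bool)%:R.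
  move: hs; rewrite /sfrac -(ler_pM2l m1pos) mulrA mulfV ?gt_eqF ?m1pos // mul1r.
  by rewrite -subn1 natrB ?(ltnW Hm) // => h; rewrite mulrC.
apply: le_trans e1 _.
rewrite [X in _ <= X](bigD1 istar) //= -[X in X <= _]add0r lerD ?ler0n //.
apply: ler_sum => j _; case: (v j < v istar) /idP => hj; last by rewrite ler0n.
by rewrite good.
Qed.

End Qsec.

Section Meas.
Context (R : realType) (d dX dY : measure_display)
  (Omega : measurableType d) (X : measurableType dX) (Y : measurableType dY)
  (P : probability Omega R) (ntrain ntest : nat)
  (Z : 'I_(ntrain + ntest) -> Omega -> (X * Y)%type)
  (Zstar : Omega -> (X * Y)%type)
  (HZ : forall i, measurable_fun setT (Z i))
  (HZstar : measurable_fun setT Zstar)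
  (s : ntrain.-tuple (X * Y)%type -> (X * Y)%type -> R)
  (Hs : measurable_fun setT (fun p : ntrain.-tuple (X * Y)%type * (X * Y)%type => s p.1 p.2)).

Local Notation T := (X * Y)%type.
Local Notation Tn := (ntrain.-tuple T).

Lemma mtrain : measurable_fun setT (train_data Z).
Proof.
apply/measurable_fun_tnthP => i.
rewrite (_ : _ \o _ = Z (lshift ntest i)); first exact: HZ.
by apply/funext => w /=; rewrite /train_data tnth_mktuple.
Qed.

Lemma mv {f : Omega -> T} : measurable_fun setT f ->
  measurable_fun setT (fun w => s (train_data Z w) (f w)).
Proof.
move=> mf.
exact: (measurableT_comp Hs (measurable_fun_pair mtrain mf)).
Qed.

Lemma mA {f : Tn -> R} : measurable_fun setT f ->
  measurable [set p : Tn * T | s p.1 p.2 <= f p.1].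
Proof.
move=> mf; rewrite -[X in measurable X]setTI.
apply: measurable_fun_le => //.
exact: (measurableT_comp mf measurable_fst).
Qed.

Definition Zs := Zstar.
HB.instance Definition _ := isMeasurableFun.Build _ _ _ _ Zs HZstar.

Definition mu := distribution P Zs.

Lemma mG {f : Tn -> R} : measurable_fun setT f ->
  measurable_fun setT (fun x : Tn => (P [set w' | s x (Zstar w') <= f x] : \bar R)).
Proof.
move=> mf.
have := measurable_fun_xsection mu (mA mf).
apply: eq_measurable_fun => x _ /=.
rewrite /mu /distribution /pushforward; congr (P _).
by apply/seteqP; split => w /=; rewrite /xsection /= inE.
Qed.

Lemma Pfine (A : set Omega) : measurable A -> P A = (fine (P A))%:E.
Proof.
move=> mA; rewrite fineK // ge0_fin_numE ?measure_ge0 //.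
exact: (le_lt_trans (probability_le1 P mA) (ltry _)).
Qed.

Definition Gx (x : Tn) (t : R) : \bar R := P [set w' | s x (Zstar w') <= t].

Lemma msx x : measurable_fun setT (fun w' => s x (Zstar w')).
Proof.
exact: (measurableT_comp Hs (measurable_fun_pair (measurable_cst x) HZstar)).
Qed.

Lemma mset x t : measurable [set w' | s x (Zstar w') <= t].
Proof.
rewrite -[X in measurable X]setTI; apply: measurable_fun_le => //.
exact: msx.
Qed.

Lemma G_mono x {t t'} : t <= t' -> (Gx x t <= Gx x t')%E.
Proof.
move=> tt'; apply: le_measure; rewrite ?inE; try exact: mset.
by move=> w /= h; apply: le_trans h tt'.
Qed.

Lemma F_up x c : c < 1 -> exists t, (c%:E <= Gx x t)%E.
Proof.
move=> c1; apply/not_existsP => hn.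
have hlt k : (Gx x k%:R <= c%:E)%E.
  by have := hn k%:R; rewrite leNgt => /negP; rewrite negbK => /ltW.
pose B (k : nat) := [set w' | s x (Zstar w') <= k%:R].
have mB k : measurable (B k) by exact: mset.
have UB : \bigcup_k B k = setT.
  apply/seteqP; split => // w _.
  exists (Num.truncn `|s x (Zstar w)|).+1 => //=; rewrite /B /=.
  exact: (le_trans (ler_norm _) (ltW (truncnS_gt _))).
have ndB : {homo B : n m / (n <= m)%N >-> (n <= m)%O}.
  move=> n m nm; apply/subsetPset => w /= h; apply: le_trans h _.
  by rewrite ler_nat.
have := @nondecreasing_cvg_mu _ _ _ P _ mB (bigcup_measurable (fun k _ => mB k)) ndB.
rewrite UB => /cvge_to_le => /(_ c%:E).
have : (\forall k \near \oo, ((P \o B) k <= c%:E)%E) by apply: nearW => k; exact: hlt.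
move=> /[swap] /[apply] h0.
have : (1%:E <= c%:E)%E by rewrite -(probability_setT P); exact: h0.
rewrite lee_fin => h1.
by move: (lt_le_trans c1 h1); rewrite ltxx.
Qed.

Lemma F_down x c : 0 < c -> exists t, (Gx x t < c%:E)%E.
Proof.
move=> c0; apply/not_existsP => hn.
have hge k : (c%:E <= Gx x (- k%:R))%E.
  by have := hn (- k%:R); rewrite ltNge => /negP; rewrite negbK.
pose B (k : nat) := [set w' | s x (Zstar w') <= - k%:R].
have mB k : measurable (B k) by exact: mset.
have IB : \bigcap_k B k = set0.
  apply/seteqP; split => // w /= h.
  have := h (Num.truncn `|s x (Zstar w)|).+1 I; rewrite /B /= lerNr => h3.
  have h4 : - s x (Zstar w) <= `|s x (Zstar w)| by rewrite -normrN ler_norm.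
  have := lt_le_trans (truncnS_gt `|s x (Zstar w)|) (le_trans h3 h4).
  by rewrite ltxx.
have niB : {homo B : n m / (n <= m)%N >-> (m <= n)%O}.
  move=> n m nm; apply/subsetPset => w /= h; apply: le_trans h _.
  by rewrite lerN2 ler_nat.
have B0 : (P (B 0%N) < +oo)%E by apply: (le_lt_trans (probability_le1 P (mB 0%N)) (ltry _)).
have := @nonincreasing_cvg_mu _ _ _ P _ B0 mB (bigcapT_measurable mB) niB.
rewrite IB measure0 => /cvge_to_ge => /(_ c%:E).
have : (\forall k \near \oo, (c%:E <= (P \o B) k)%E) by apply: nearW => k; exact: hge.
move=> /[swap] /[apply]; rewrite lee_fin => h1.
by move: (lt_le_trans c0 h1); rewrite ltxx.
Qed.

Lemma F_rc x c q : (forall t, q < t -> (c%:E <= Gx x t)%E) -> (c%:E <= Gx x q)%E.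
Proof.
move=> hq.
pose B (k : nat) := [set w' | s x (Zstar w') <= q + k.+1%:R^-1].
have mB k : measurable (B k) by exact: mset.
have IB : \bigcap_k B k = [set w' | s x (Zstar w') <= q].
  apply/seteqP; split => w /= h.
    rewrite leNgt; apply/negP => /ltr_add_invr [k hk].
    by have := h k I; rewrite /B /= leNgt hk.
  move=> k _; rewrite /B /=; apply: le_trans h _.
  by rewrite lerDl invr_ge0.
have niB : {homo B : n m / (n <= m)%N >-> (m <= n)%O}.
  move=> n m nm; apply/subsetPset => w /= h; apply: le_trans h _.
  rewrite lerD2l lef_pV2 ?posrE ?ltr0n // ler_nat //.
have B0 : (P (B 0%N) < +oo)%E by apply: (le_lt_trans (probability_le1 P (mB 0%N)) (ltry _)).
have := @nonincreasing_cvg_mu _ _ _ P _ B0 mB (bigcapT_measurable mB) niB.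
rewrite IB => /cvge_to_ge; apply; apply: nearW => k /=.
apply: hq; by rewrite ltrDl invr_gt0 ltr0n.
Qed.

Definition qf (c : R) (x : Tn) : R := inf [set t | (c%:E <= Gx x t)%E].

Section qfsec.
Variables (c : R) (c0 : 0 < c) (c1 : c < 1).

Lemma qf_ne x : [set t | (c%:E <= Gx x t)%E] !=set0.
Proof. by have [t ht] := @F_up x c c1; exists t. Qed.

Lemma qf_lb x : has_lbound [set t | (c%:E <= Gx x t)%E].
Proof.
have [t0 ht0] := @F_down x c c0; exists t0 => t /= ht.
rewrite leNgt; apply/negP => tt0.
have := le_trans ht (G_mono x (ltW tt0)).
by rewrite leNgt ht0.
Qed.

Lemma qf_lt x t : t < qf c x -> (Gx x t < c%:E)%E.
Proof.
move=> tq; rewrite ltNge; apply/negP => h.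
have := ge_inf (qf_lb x) h; rewrite -/(qf c x).
by rewrite leNgt tq.
Qed.

Lemma qf_ge x : (c%:E <= Gx x (qf c x))%E.
Proof.
apply: F_rc => t qt.
have [y Sy yt] := inf_lt (qf_ne x) qt.
exact: le_trans Sy (G_mono x (ltW yt)).
Qed.

Lemma qf_leE x t : (qf c x <= t) = (c%:E <= Gx x t)%E.
Proof.
apply/idP/idP => h.
  exact: le_trans (qf_ge x) (G_mono x h).
by have := ge_inf (qf_lb x) h.
Qed.

Lemma qf_meas : measurable_fun setT (qf c).
Proof.
apply: (measurability _ (RGenOInfty.measurableE R)) => //.
move=> _ [_ [t ->] <-].
have -> : setT `&` qf c @^-1` `]t, +oo[%classic = ~` [set x | (c%:E <= Gx x t)%E].
  apply/seteqP; split => x /=.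
    by move=> [_]; rewrite in_itv /= andbT => h; rewrite -qf_leE leNgt h.
  by move=> h; split => //; rewrite in_itv /= andbT ltNge qf_leE; apply/negP.
apply: measurableC.
rewrite -[X in measurable X]setTI.
apply: emeasurable_fun_c_infty => //.
exact: (@mG (fun=> t) (measurable_cst t)).
Qed.

End qfsec.

Lemma prob_ge0 (A : set Omega) : (0 <= P A)%E.
Proof. exact: measure_ge0. Qed.

Definition pr (A : set Omega) : R := fine (P A).

Lemma pr_le (A B : set Omega) : measurable A -> measurable B -> A `<=` B -> pr A <= pr B.
Proof.
move=> mA mB AB; rewrite -lee_fin -!Pfine //.
by apply: le_measure => //; rewrite inE.
Qed.

Lemma pr_le1 (A : set Omega) : measurable A -> pr A <= 1.
Proof. by move=> mA; rewrite -lee_fin -Pfine //; exact: probability_le1. Qed.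

Lemma pr_inter (A B : set Omega) : measurable A -> measurable B ->
  pr A + pr B - 1 <= pr (A `&` B).
Proof.
move=> mA mB.
have mAB : measurable (A `&` B) by exact: measurableI.
have mAuB : measurable (A `|` B) by exact: measurableU.
have h := measureUfinr mA mB (le_lt_trans (probability_le1 P mB) (ltry _)).
have e1 : P (A `|` B) = (pr A + pr B - pr (A `&` B))%:E.
  by rewrite EFinB EFinD /pr -!Pfine //; exact: h.
have e2 : pr (A `|` B) = pr A + pr B - pr (A `&` B) by rewrite /pr e1.
have := pr_le1 _ mAuB; rewrite e2 => h2; lra.
Qed.

Lemma mind {b : Omega -> bool} : measurable [set w | b w] ->
  measurable_fun setT (fun w => (b w)%:R : R).
Proof.
move=> mb; apply: (eq_measurable_fun (\1_[set w | b w] : Omega -> R)); last first.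
  exact: measurable_indic.
move=> w _; rewrite indicE; case: (boolP (b w)) => h.
  by rewrite mem_set.
by rewrite memNset //= ; apply/negP.
Qed.

Lemma mle {f g : Omega -> R} : measurable_fun setT f -> measurable_fun setT g ->
  measurable [set w | f w <= g w].
Proof.
by move=> mf mg; rewrite -[X in measurable X]setTI; apply: measurable_fun_le.
Qed.

Lemma mlt {f g : Omega -> R} : measurable_fun setT f -> measurable_fun setT g ->
  measurable [set w | f w < g w].
Proof.
move=> mf mg.
rewrite (_ : [set w | f w < g w] = ~` [set w | g w <= f w]).
  exact/measurableC/mle.
by apply/seteqP; split => w /=; rewrite ltNge => /negP.
Qed.

Definition vv (w : Omega) (j : 'I_ntest) : R := s (train_data Z w) (Z (rshift ntrain j) w).

Lemma mvv j : measurable_fun setT (fun w => vv w j).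
Proof. exact: (mv (HZ _)). Qed.

Definition avg (f : Omega -> R) (w : Omega) : R :=
  ntest%:R^-1 * \sum_(j < ntest) ((vv w j <= f w)%R : bool)%:R.

Lemma mavg {f} : measurable_fun setT f -> measurable_fun setT (avg f).
Proof.
move=> mf.
rewrite (_ : avg f = ( *%R ntest%:R^-1) \o (fun w => \sum_(j < ntest) ((vv w j <= f w)%R : bool)%:R)) //.
apply: measurableT_comp; first exact: mulrl_measurable.
apply: measurable_sum => j; apply: mind; exact: mle (mvv j) mf.
Qed.

Lemma mPq {f : Tn -> R} : measurable_fun setT f ->
  measurable_fun setT (Pq_train P s f Z Zstar).
Proof.
move=> mf; apply/measurable_EFinP.
rewrite (_ : _ \o _ = (fun x => (P [set w' | s x (Zstar w') <= f x] : \bar R)) \o train_data Z).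
  exact: (measurableT_comp (mG mf) mtrain).
apply/funext => w /=; rewrite /Pq_train -Pfine //; exact: mset.
Qed.

Section Main.
Context (Htest : (2 <= ntest)%N)
  (alpha : R) (Halpha : 0 < alpha < 1)
  (eps_test : R) (Heps : 0 < eps_test < 1)
  (eps_i : 'I_ntest -> R) (Hepsi : forall i, 0 < eps_i i < 1)
  (delta : R) (Hdelta : 0 < delta < 1)
  (H1 : forall q : ntrain.-tuple (X * Y)%type -> R, measurable_fun setT q ->
     forall i : 'I_ntest,
       (`| P [set w | (s (train_data Z w) (Z (rshift ntrain i) w) <= q (train_data Z w))%R]
          - \int[P]_w (Pq_train P s q Z Zstar w)%:E | <= (eps_i i)%:E)%E)
  (H2 : forall q : ntrain.-tuple (X * Y)%type -> R, measurable_fun setT q ->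
     ((1 - delta)%:E <=
      P [set w | (`| ntest%:R^-1 *
                    \sum_(i < ntest)
                       ((s (train_data Z w) (Z (rshift ntrain i) w)
                          <= q (train_data Z w))%R : bool)%:R
                  - Pq_train P s q Z Zstar w | <= eps_test)%R])%E).

Lemma stepA (c : R) (c0 : 0 < c) (c1 : c < 1) i :
  ((c - eps_i i)%:E <= P [set w | (vv w i <= qf c (train_data Z w))%R])%E.
Proof.
have mq := qf_meas c c0 c1.
have mA : measurable [set w | vv w i <= qf c (train_data Z w)].
  exact: mle (mvv i) (measurableT_comp mq mtrain).
have h1 := H1 _ mq i.
have hI : (c%:E <= \int[P]_w (Pq_train P s (qf c) Z Zstar w)%:E)%E.
  have e : (\int[P]_w (cst c%:E) w = c%:E)%E.
    rewrite integral_cst // -[RHS]mule1; congr (_ * _)%E.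
    exact: probability_setT.
  rewrite -[leLHS]e; apply: ge0_le_integral => //.
  - by move=> w _; rewrite /= lee_fin ltW.
  - by apply/measurable_EFinP; exact: (mPq mq).
  - move=> w _; rewrite /= /Pq_train lee_fin.
    rewrite -lee_fin -Pfine; last exact: mset.
    exact: (qf_ge c c1 (train_data Z w)).
move: h1 hI; rewrite (Pfine _ mA).
move: (\int[P]_w (Pq_train P s (qf c) Z Zstar w)%:E)%E => I.
case: I => [r | | ] //=.
  rewrite !lee_fin ler_norml => /andP[h h'] hr; lra.
Qed.

Lemma ntest_gt0 : 0 < ntest%:R :> R.
Proof. by rewrite ltr0n; case: ntest Htest. Qed.

Lemma avg_mono f g w : f w <= g w -> avg f w <= avg g w.
Proof.
move=> fg; rewrite /avg ler_pM2l ?invr_gt0 ?ntest_gt0 //.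
apply: ler_sum => j _; case: (vv w j <= f w) /idP => h; last by rewrite ler0n.
by rewrite (le_trans h fg).
Qed.

Lemma stepB (c : R) (c0 : 0 < c) (c1 : c < 1) :
  exists2 E : set Omega, measurable E /\ ((1 - delta)%:E <= P E)%E &
    E `<=` [set w | ntest%:R^-1 * \sum_(j < ntest) ((vv w j < qf c (train_data Z w))%R : bool)%:R
                    <= c + eps_test].
Proof.
have mq := qf_meas c c0 c1.
pose thr (k : nat) x := qf c x - k.+1%:R^-1.
have mthr k : measurable_fun setT (thr k).
  exact: (measurable_funB mq (measurable_cst _)).
pose Gk k := [set w | avg (fun w => thr k (train_data Z w)) w <= c + eps_test].
have mGk k : measurable (Gk k).
  exact: (mle (mavg (measurableT_comp (mthr k) mtrain)) (measurable_cst _)).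
have hGk k : ((1 - delta)%:E <= P (Gk k))%E.
  apply: le_trans (H2 _ (mthr k)) _.
  apply: le_measure; rewrite ?inE //.
    apply: mle; last exact: measurable_cst.
    apply: measurableT_comp => //; apply: measurable_funB.
      exact: (mavg (measurableT_comp (mthr k) mtrain)).
    exact: (mPq (mthr k)).
  move=> w /=; rewrite ler_norml => /andP [_ h'].
  have hlt : (Gx (train_data Z w) (thr k (train_data Z w)) < c%:E)%E.
    apply: (qf_lt c c0).
    by rewrite /thr ltrBlDr ltrDl invr_gt0 ltr0n.
  rewrite /Gx (Pfine _ (mset _ _)) lte_fin in hlt.
  rewrite /Gk /= /avg.
  move: h'; rewrite /Pq_train => h'; lra.
have niG : {homo Gk : n m / (n <= m)%N >-> (m <= n)%O}.
  move=> n n' nn'; apply/subsetPset => w /= h; apply: le_trans _ h.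
  apply: avg_mono; rewrite /thr lerD2l lerN2 lef_pV2 ?posrE ?ltr0n // ler_nat //.
have G0 : (P (Gk 0%N) < +oo)%E by apply: (le_lt_trans (probability_le1 P (mGk 0%N)) (ltry _)).
exists (\bigcap_k Gk k).
  split; first exact: bigcapT_measurable.
  have := @nonincreasing_cvg_mu _ _ _ P _ G0 mGk (bigcapT_measurable mGk) niG.
  by move/cvge_to_ge; apply; apply: nearW => k; exact: hGk.
move=> w /= hw.
have [e e0 he] := gap _ _ (qf c (train_data Z w)) (vv w).
have [k hk] := ltr_add_invr e0; rewrite add0r in hk.
apply: le_trans (hw k I); rewrite /avg ler_pM2l ?invr_gt0 ?ntest_gt0 //.
apply: ler_sum => j _; case: (vv w j < qf c (train_data Z w)) /idP => h; last by rewrite ler0n.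
have := he j h; rewrite /thr => h2.
have -> // : vv w j <= qf c (train_data Z w) - k.+1%:R^-1.
by apply: le_trans h2 _; rewrite lerD2l lerN2 ltW.
Qed.

Lemma part1 i :
  ((1 - alpha - eps_i i - eps_test - delta - ntest%:R^-1)%:E <=
   P [set w | (vv w i <= qcal (1 - alpha) (vv w) i)%R])%E.
Proof.
have /andP [a0 a1] := Halpha.
have /andP [e0 e1] := Heps.
have /andP [ei0 ei1] := Hepsi i.
have /andP [d0 d1] := Hdelta.
have x0 : 0 < ntest%:R^-1 :> R by rewrite invr_gt0 ntest_gt0.
pose c := 1 - alpha - eps_test - ntest%:R^-1.
case: (lerP c 0) => [cle0 | c0].
  apply: le_trans (prob_ge0 _); rewrite lee_fin; rewrite /c in cle0; lra.
have c1 : c < 1 by rewrite /c; lra.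
have phi0 : 0 < 1 - alpha by lra.
have phi1 : 1 - alpha <= 1 by lra.
have hS : [set w | (vv w i <= qcal (1 - alpha) (vv w) i)%R] =
          [set w | sfrac R ntest (vv w) i < 1 - alpha].
  by apply/seteqP; split => w /=; rewrite (qcal_iff _ _ Htest _ phi0 phi1).
have msf : measurable_fun setT (fun w => sfrac R ntest (vv w) i).
  rewrite (_ : (fun w => _) = ( *%R (ntest.-1%:R^-1)) \o
     (fun w => \sum_(j < ntest) (if j != i then ((vv w j < vv w i)%R : bool)%:R else 0))).
    apply: measurableT_comp; first exact: mulrl_measurable.
    apply: measurable_sum => j; case: (j != i) => /=.
      by apply: mind; exact: mlt (mvv j) (mvv i).
    exact: measurable_cst.
  by apply/funext => w /=; rewrite /sfrac big_mkcond.
have mS : measurable [set w | (vv w i <= qcal (1 - alpha) (vv w) i)%R].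
  by rewrite hS; exact: mlt msf (measurable_cst _).
have mA : measurable [set w | (vv w i <= qf c (train_data Z w))%R].
  exact: mle (mvv i) (measurableT_comp (qf_meas c c0 c1) mtrain).
have hA := stepA c c0 c1 i.
have [E [mE hE] hEsub] := stepB c c0 c1.
have sub : [set w | (vv w i <= qf c (train_data Z w))%R] `&` E `<=`
           [set w | (vv w i <= qcal (1 - alpha) (vv w) i)%R].
  move=> w [hAw /hEsub hEw]; rewrite hS /=.
  move: hAw hEw; set q := qf c (train_data Z w) => /= hAw hEw.
  set K := \sum_(j < ntest) _ in hEw.
  have K1 : \sum_(j < ntest | j != i) ((vv w j < vv w i)%R : bool)%:R <= K.
    rewrite /K [X in _ <= X](bigD1 i) //= -[X in X <= _]add0r lerD ?ler0n //.
    apply: ler_sum => j _; case: (vv w j < vv w i) /idP => h; last by rewrite ler0n.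
    by rewrite (lt_le_trans h hAw).
  rewrite /sfrac.
  set K' := \sum_(j < ntest | j != i) _ in K1 *.
  have M1 : (ntest.-1)%:R = ntest%:R - 1 :> R.
    by rewrite -subn1 natrB //; case: ntest Htest.
  have M2 : 2 <= ntest%:R :> R by rewrite ler_nat.
  have Mx : ntest%:R * ntest%:R^-1 = 1 :> R by rewrite mulfV // gt_eqF // ntest_gt0.
  have hK : K <= ntest%:R * (1 - alpha) - 1.
    have := hEw; rewrite -(ler_pM2l ntest_gt0) mulrA mulfV ?gt_eqF ?ntest_gt0 // mul1r.
    rewrite /c => h; apply: le_trans h _.
    rewrite (_ : 1 - alpha - eps_test - ntest%:R^-1 + eps_test = (1 - alpha) - ntest%:R^-1); last by lra.
    by rewrite mulrBr mulfV ?gt_eqF ?ntest_gt0.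
  rewrite M1 mulrC ltr_pdivrMr; last by lra.
  nra.
have hint := pr_inter _ _ mA mE.
have hsubpr := pr_le _ _ (measurableI _ _ mA mE) mS sub.
rewrite /pr in hint hsubpr.
rewrite (Pfine _ mS) lee_fin.
rewrite (Pfine _ mA) lee_fin in hA.
rewrite (Pfine _ mE) lee_fin in hE.
rewrite /c in hA; lra.
Qed.

Lemma part2' :
  ((1 - 2 * delta)%:E <=
   P [set w | (1 - alpha - eps_test - ntest%:R^-1 <=
              ntest%:R^-1 * \sum_(i < ntest)
                 ((vv w i <= qcal (1 - alpha) (vv w) i)%R : bool)%:R)%R])%E.
Proof.
have /andP [a0 a1] := Halpha.
have /andP [e0 e1] := Heps.
have /andP [d0 d1] := Hdelta.
have phi0 : 0 < 1 - alpha by lra.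
have phi1 : 1 - alpha <= 1 by lra.
have -> : [set w | (1 - alpha - eps_test - ntest%:R^-1 <=
              ntest%:R^-1 * \sum_(i < ntest)
                 ((vv w i <= qcal (1 - alpha) (vv w) i)%R : bool)%:R)%R] = setT.
  apply/seteqP; split => // w _ /=.
  have := part2 _ _ Htest _ phi0 phi1 (vv w); lra.
have -> : P setT = 1%E by exact: probability_setT.
rewrite lee_fin; lra.
Qed.

End Main.
End Meas.

Theorem theorem4p1
  (R : realType) (d dX dY : measure_display)
  (Omega : measurableType d) (X : measurableType dX) (Y : measurableType dY)
  (P : probability Omega R)
  (ntrain ntest : nat) (Htrain : (0 < ntrain)%N) (Htest : (2 <= ntest)%N)
  (Z : 'I_(ntrain + ntest) -> Omega -> (X * Y)%type)
  (Zstar : Omega -> (X * Y)%type)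
  (HZ : forall i, measurable_fun setT (Z i))
  (HZstar : measurable_fun setT Zstar)
  (Hdist : forall i (B : set (X * Y)%type), measurable B ->
     P (Z i @^-1` B) = P (Zstar @^-1` B))
  (Hindep : indep2 P (sample Z) Zstar)
  (s : ntrain.-tuple (X * Y)%type -> (X * Y)%type -> R)
  (Hs : measurable_fun setT (fun p : ntrain.-tuple (X * Y)%type * (X * Y)%type => s p.1 p.2))
  (alpha : R) (Halpha : 0 < alpha < 1)
  (eps_test : R) (Heps : 0 < eps_test < 1)
  (eps_i : 'I_ntest -> R) (Hepsi : forall i, 0 < eps_i i < 1)
  (delta : R) (Hdelta : 0 < delta < 1)
  (H1 : forall q : ntrain.-tuple (X * Y)%type -> R, measurable_fun setT q ->
     forall i : 'I_ntest,
       (`| P [set w | (s (train_data Z w) (Z (rshift ntrain i) w) <= q (train_data Z w))%R]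
          - \int[P]_w (Pq_train P s q Z Zstar w)%:E | <= (eps_i i)%:E)%E)
  (H2 : forall q : ntrain.-tuple (X * Y)%type -> R, measurable_fun setT q ->
     ((1 - delta)%:E <=
      P [set w | (`| ntest%:R^-1 *
                    \sum_(i < ntest)
                       ((s (train_data Z w) (Z (rshift ntrain i) w)
                          <= q (train_data Z w))%R : bool)%:R
                  - Pq_train P s q Z Zstar w | <= eps_test)%R])%E) :
  (forall i : 'I_ntest,
     ((1 - alpha - eps_i i - eps_test - delta - ntest%:R^-1)%:E <=
      P [set w | (s (train_data Z w) (Z (rshift ntrain i) w)
                 <= qcal (1 - alpha)
                      (fun j => s (train_data Z w) (Z (rshift ntrain j) w)) i)%R])%E)
  /\
  ((1 - 2 * delta)%:E <=
   P [set w | (1 - alpha - eps_test - ntest%:R^-1 <=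
              ntest%:R^-1 *
              \sum_(i < ntest)
                 ((s (train_data Z w) (Z (rshift ntrain i) w)
                    <= qcal (1 - alpha)
                         (fun j => s (train_data Z w) (Z (rshift ntrain j) w)) i)%R : bool)%:R)%R])%E.
Proof.
split.
  move=> i.
  exact: (part1 _ _ _ _ _ _ _ P _ _ Z Zstar HZ HZstar s Hs Htest _ Halpha _ Heps _ Hepsi _ Hdelta H1 H2 i).
have h := (part2' _ _ _ _ _ _ _ P _ _ Z s Htest _ Halpha _ Heps _ Hdelta).
exact h.
Qed.
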